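(* There is a function $f$ such that, for every graph $H$ and every positive integer $t$, one of the following holds: (i) $K_t$ is a projection of $H$; (ii) $K_{t,t,t}$ is a projection of $H$; (iii) an extended biclique can be obtained from $H$ by deleting at most $f(t)$ vertices.
   Context: A graph $H'$ is a projection of $H$ if $H'$ can be obtained from $H$ by a sequence of vertex deletions and identifications of two nonadjacent vertices. $K_{t,t,t}$ is the complete tripartite graph with three parts of size $t$. An extended biclique is a complete bipartite graph together with a set of isolated vertices. *)

(* Defs.v *)
From mathcomp Require Import all_boot.
Set Implicit Arguments. Unset Strict Implicit. Unset Printing Implicit Defensive.

(* A graph living inside a finite ambient type T: vertex set gV and
   adjacency relation gadj (only its restriction to gV matters). *)
Record graph (T : finType) := Graph { gV : {set T}; gadj : rel T }.

Definition simple_graph (T : finType) (e : rel T) := symmetric e /\ irreflexive e.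

(* Identification of u and v: v disappears, u becomes adjacent to the union
   of the neighbourhoods of u and v. *)
Definition merge_adj (T : finType) (a : rel T) (u v : T) : rel T :=
  fun x y =>
    if x == u then a u y || a v y
    else if y == u then a x u || a x v
    else a x y.

Inductive proj_step (T : finType) (G : graph T) : graph T -> Prop :=
| step_delete v : v \in gV G -> proj_step G (Graph (gV G :\ v) (gadj G))
| step_identify u v : u \in gV G -> v \in gV G -> u != v -> ~~ gadj G u v ->
    proj_step G (Graph (gV G :\ v) (merge_adj (gadj G) u v)).

Inductive reachable (T : finType) (G : graph T) : graph T -> Prop :=
| reach_refl : reachable G G
| reach_step G1 G2 : reachable G G1 -> proj_step G1 G2 -> reachable G G2.

Definition iso_to (T S : finType) (G : graph T) (r : rel S) :=
  exists phi : S -> T, [/\ injective phi, [set phi x | x in S] = gV G &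
    forall x y, gadj G (phi x) (phi y) = r x y].

Definition is_projection (T S : finType) (e : rel T) (r : rel S) :=
  exists G', reachable (Graph [set: T] e) G' /\ iso_to G' r.

Definition K_adj (t : nat) : rel 'I_t := fun i j => i != j.
Definition Kttt_adj (t : nat) : rel ('I_3 * 'I_t) := fun x y => x.1 != y.1.

(* Subgraph of (T,e) induced on W is an extended biclique: a complete
   bipartite graph with parts A, B (possibly empty) plus isolated vertices. *)
Definition extended_biclique (T : finType) (e : rel T) (W : {set T}) :=
  exists A B : {set T}, [/\ A \subset W, B \subset W, [disjoint A & B] &
    forall x y, x \in W -> y \in W ->
      e x y = ((x \in A) && (y \in B)) || ((x \in B) && (y \in A))].

(* Main.v *)
Require Import Defs.
From mathcomp Require Import all_boot.
From mathcomp Require Import zify.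
From Stdlib Require Import Classical.
Set Implicit Arguments. Unset Strict Implicit. Unset Printing Implicit Defensive.


Section Proj.
Variables (T : finType) (e : rel T).
Hypothesis esym : symmetric e.
Hypothesis eirr : irreflexive e.

Definition touch (X Y : {set T}) := [exists x in X, exists y in Y, e x y].

Lemma touchP (X Y : {set T}) : reflect (exists x y, [/\ x \in X, y \in Y & e x y]) (touch X Y).
Proof.
apply: (iffP existsP) => [[x /andP[xX /existsP[y /andP[yY exy]]]]|[x [y [xX yY exy]]]].
  by exists x, y.
by exists x; rewrite xX; apply/existsP; exists y; rewrite yY.
Qed.

Lemma touchC (X Y : {set T}) : touch X Y = touch Y X.
Proof.
by apply/touchP/touchP => [][x [y [? ? ?]]]; exists y, x; split => //; rewrite esym.
Qed.

Lemma touchUl (X Y Z : {set T}) : touch (X :|: Y) Z = touch X Z || touch Y Z.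
Proof.
apply/touchP/orP => [[x [y []]]|[]/touchP[x [y [xX yZ exy]]]].
- rewrite inE => /orP[] xX yZ exy; [left|right]; apply/touchP; by exists x, y.
- by exists x, y; rewrite inE xX.
- by exists x, y; rewrite inE xX orbT.
Qed.

Lemma touchUr (X Y Z : {set T}) : touch Z (X :|: Y) = touch Z X || touch Z Y.
Proof. by rewrite touchC touchUl !(touchC Z). Qed.

Lemma touch1 x y : touch [set x] [set y] = e x y.
Proof.
apply/touchP/idP => [[x' [y' []]]|exy]; first by rewrite !inE => /eqP-> /eqP->.
by exists x, y; rewrite !inE.
Qed.

Definition Inv (V : {set T}) (a : rel T) (B : T -> {set T}) :=
  forall x y, x \in V -> y \in V -> a x y = (x != y) && touch (B x) (B y).

Lemma reach_trans (G1 G2 G3 : graph T) :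
  reachable G1 G2 -> reachable G2 G3 -> reachable G1 G3.
Proof.
move=> h12 h23; elim: h23 => // G G' _ IH st.
exact: reach_step IH st.
Qed.

Lemma del_many (V : {set T}) a n : forall D : {set T}, #|D| = n -> D \subset V ->
  reachable (Graph V a) (Graph (V :\: D) a).
Proof.
elim: n => [|n IH] D cD sDV.
  move/eqP: cD; rewrite cards_eq0 => /eqP->; rewrite setD0; exact: reach_refl.
have: 0 < #|D| by rewrite cD.
rewrite card_gt0 => /set0Pn[d dD].
have cD' : #|D :\ d| = n by move: cD; rewrite (cardsD1 d D) dD add1n => -[].
have sD' : D :\ d \subset V by apply: subset_trans sDV; apply: subsetDl.
have h := IH _ cD' sD'.
have dV : d \in gV (Graph (V :\: (D :\ d)) a).
  by rewrite /= !inE eqxx /= (subsetP sDV).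
have -> : V :\: D = (V :\: (D :\ d)) :\ d.
  apply/setP=> x; rewrite !inE; case: (x =P d) => [->|] //=.
  by rewrite dD.
exact: reach_step h (step_delete dV).
Qed.

Lemma merge_inv (V : {set T}) a B u v : Inv V a B -> u \in V -> v \in V -> u != v ->
  ~~ a u v ->
  Inv (V :\ v) (merge_adj a u v) (fun x => if x == u then B u :|: B v else B x).
Proof.
move=> I uV vV uv nuv x y; rewrite !inE => /andP[xv xV] /andP[yv yV].
rewrite /merge_adj.
have hvu : a v u = false.
  by rewrite I // touchC; move: nuv; rewrite I // uv /= => /negbTE ->; rewrite andbF.
case: (x =P u) => [->|xu]; case: (y =P u) => [->|yu].
- by rewrite eqxx hvu (I u u) // eqxx.
- rewrite touchUl (I u y) // (I v y) // (eq_sym v y) yv.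
  by rewrite (introF eqP (nesym yu)) /=; case: (u =P y) => // uy; case: yu.
- rewrite touchUr (I x u) // (I x v) // xv.
  by rewrite (introF eqP xu).
- by rewrite I.
Qed.

Lemma Inv_ext (V : {set T}) a B B' : (forall x, x \in V -> B x = B' x) -> Inv V a B -> Inv V a B'.
Proof. by move=> h I x y xV yV; rewrite I // !h. Qed.


Lemma proj_classes (S : finType) (r : rel S) (c : S -> {set T}) :
  (forall s, exists x, x \in c s) ->
  (forall s s' x, x \in c s -> x \in c s' -> s = s') ->
  (forall s x y, x \in c s -> y \in c s -> ~~ e x y) ->
  (forall s s', r s s' = (s != s') && touch (c s) (c s')) ->
  is_projection e r.
Proof.
move=> cne cdis cind rE.
have [rp rpP] := fin_all_exists cne.
have rpinj : injective rp by move=> s s' h; apply: (cdis s s' (rp s)); rewrite // h.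
have [rep repP] : exists rep : T -> T, forall y s, y \in c s -> rep y = rp s.
  apply: (fin_all_exists (P := fun y z => forall s, y \in c s -> z = rp s)) => y.
  case: (pickP (fun s => y \in c s)) => [s ys | none].
    by exists (rp s) => s' ys'; rewrite (cdis s s' y).
  by exists y => s' ys'; move: (none s'); rewrite ys'.
pose U := [set y | [exists s, y \in c s]].
have UE : forall y, (y \in U) = [exists s, y \in c s] by move=> y; rewrite inE.
clearbody U.
pose R := [set rp s | s in S].
have RU : R \subset U.
  by apply/subsetP=> x /imsetP[s _ ->]; rewrite UE; apply/existsP; exists s.
have repR : forall y, y \in U -> rep y \in R.
  by move=> y; rewrite UE => /existsP[s ys]; rewrite (repP y s ys) imset_f.
have repRid : forall y, y \in R -> rep y = y.
  by move=> y /imsetP[s _ ->]; rewrite (repP _ s).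
pose BD (D : {set T}) x :=
  if x \in D then [set x] else [set y in U | (rep y == x) && (y \notin D)].
have phase2 : forall n (D : {set T}), #|D| = n -> D \subset U :\: R ->
  forall a, Inv (R :|: D) a (BD D) ->
  exists a', reachable (Graph (R :|: D) a) (Graph R a') /\ Inv R a' (BD set0).
  elim=> [|n IH] D cD sD a I.
    move/eqP: cD; rewrite cards_eq0 => /eqP cD; subst D.
    by exists a; rewrite setU0; split => //; [exact: reach_refl | rewrite setU0 in I].
  have: 0 < #|D| by rewrite cD.
  rewrite card_gt0 => /set0Pn[d dD].
  have /setDP[dU dR] := subsetP sD d dD.
  have RD : forall x, x \in R -> x \notin D.
    by move=> x xR; apply/negP => /(subsetP sD); rewrite inE xR.
  pose u := rep d.
  have uR : u \in R by exact: repR.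
  have uV : u \in R :|: D by rewrite inE uR.
  have dV : d \in R :|: D by rewrite inE dD orbT.
  have ud : u != d by apply/eqP => ud; move: dR; rewrite -ud uR.
  have nad : ~~ a u d.
    rewrite I // ud /= /BD (negbTE (RD _ uR)) dD.
    apply/touchP => -[y [z [yB]]]; rewrite inE => /eqP -> eyd.
    move: yB; rewrite inE => /andP[] /[dup] yU; rewrite UE => /existsP[s ys].
    move: dU; rewrite UE => /existsP[s' ds'].
    rewrite /u (repP _ _ ys) (repP _ _ ds') => /andP[/eqP /rpinj ss' _].
    by subst s'; move: (cind s y d ys ds'); rewrite eyd.
  have I1 := merge_inv I uV dV ud nad.
  have eV : (R :|: D) :\ d = R :|: (D :\ d).
    apply/setP=> x; rewrite !inE; case: (x =P d) => [->|] //=.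
    by rewrite (negbTE dR).
  have I2 : Inv (R :|: (D :\ d)) (merge_adj a u d) (BD (D :\ d)).
    rewrite -eV; apply: Inv_ext I1 => x; rewrite eV !inE => xV.
    case: (x =P u) => [->|xu].
      rewrite /BD (negbTE (RD _ uR)) !inE (negbTE (RD _ uR)) andbF dD.
      apply/setP=> y; rewrite !inE; case: (y =P d) => [->|yd] /=.
        by rewrite dU /u eqxx orbT.
      by rewrite orbF.
    rewrite /BD !inE; case: (x =P d) => [xd|xd] /=.
      by move: xV; rewrite xd eqxx (negbTE dR).
    case: ifP => // xD; apply/setP=> y; rewrite !inE.
    case: (y =P d) => [->|yd] //=.
    by rewrite dD /= (introF eqP (nesym xu)) andbF.
  have cD' : #|D :\ d| = n by move: cD; rewrite (cardsD1 d D) dD add1n => -[].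
  have sD' : D :\ d \subset U :\: R by apply: subset_trans sD; apply: subsetDl.
  have [a' [h1 h2]] := IH _ cD' sD' _ I2.
  exists a'; split => //; apply: reach_trans h1.
  have st := @step_identify _ (Graph (R :|: D) a) u d uV dV ud nad.
  rewrite -eV.
  exact: (reach_step (reach_refl _) st).
have eT : [set: T] :\: ~: U = R :|: (U :\: R).
  apply/setP=> x; rewrite !inE negbK andbT; case xR: (x \in R) => //=.
  exact: (subsetP RU x xR).
have I0 : Inv (R :|: (U :\: R)) e (BD (U :\: R)).
  move=> x y xV yV.
  have hB : forall z, z \in R :|: (U :\: R) -> BD (U :\: R) z = [set z].
    move=> z; rewrite /BD !inE; case: (z \in R) /idP => [zR|zR] /=; last first.
      by move=> ->.
    move=> _; apply/setP=> w; rewrite !inE.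
    case: (w =P z) => [->|wz]; first by rewrite (subsetP RU) // repRid // eqxx zR.
    case: (w \in R) /idP => [wR|wR]; first by rewrite repRid // (introF eqP wz) andbF.
    by case: (w \in U) => //=; rewrite andbF.
  rewrite !hB // touch1; case: (x =P y) => [->|] //=; by rewrite eirr.
have [a' [h1 h2]] := phase2 _ _ (erefl _) (subxx _) _ I0.
exists (Graph R a'); split.
  apply: reach_trans h1.
  rewrite -eT; apply: del_many (erefl _) _; exact: subsetT.
exists rp; split => // s s' /=.
have hc : forall s, BD set0 (rp s) = c s.
  move=> s0; rewrite /BD inE; apply/setP=> y; rewrite !inE andbT.
  apply/idP/idP => [|ys0].
    case/andP => yU; move: (yU); rewrite UE => /existsP[s1 ys1].
    by rewrite (repP _ _ ys1) => /eqP/rpinj <-.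
  rewrite (repP _ _ ys0) eqxx andbT UE; apply/existsP; by exists s0.
rewrite h2 ?imset_f // !hc rE (inj_eq rpinj) //.
Qed.

End Proj.


Section Ramsey.
Variables (C : finType) (c0 : C).

Lemma sum_count (X : Type) (l : seq X) (f : X -> C) :
  \sum_(z : C) count (fun y => f y == z) l = size l.
Proof.
elim: l => [|y l IH] /=; first by rewrite big1.
rewrite big_split /= IH (bigD1 (f y)) //= eqxx big1 ?add1n ?addn0 //.
by move=> z; rewrite eq_sym => /negbTE ->.
Qed.

Lemma pigeon (X : Type) (l : seq X) (f : X -> C) n :
  #|C| * n <= size l -> exists z, n <= count (fun y => f y == z) l.
Proof.
move=> hl; case: n hl => [|n] hl; first by exists c0.
case: (pickP (fun z => n.+1 <= count (fun y => f y == z) l)) => [z hz|none].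
  by exists z.
have : size l <= #|C| * n.
  have : \sum_(z : C) count (fun y => f y == z) l <= \sum_(z : C) n.
    apply: leq_sum => z _.
    by move: (none z); rewrite /= ltnNge => /negbFE.
  by rewrite sum_count sum_nat_const.
move: hl; rewrite mulnS.
have : 0 < #|C| by apply/card_gt0P; exists c0.
lia.
Qed.

Fixpoint g m := if m is m'.+1 then (#|C| * g m').+1 else 0.

Lemma fwd (col : nat -> nat -> C) m : forall L : seq nat, sorted ltn L -> g m <= size L ->
  exists (sg : nat -> nat) (k : nat -> C),
   [/\ (forall i, i < m -> sg i \in L),
       (forall i j, i < j -> j < m -> sg i < sg j) &
       (forall i j, i < j -> j < m -> col (sg i) (sg j) = k i)].
Proof.
elim: m => [|m IH] L sL hL.
  by exists (fun _ => 0), (fun _ => c0); split.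
case: L sL hL => [|x L'] //= sL hL.
have allx := order_path_min ltn_trans sL.
have sL' := path_sorted sL.
have [z hz] := pigeon (col x) (l := L') (n := g m) hL.
have sL'' := sorted_filter ltn_trans (fun y => col x y == z) sL'.
rewrite -size_filter in hz.
have [sg [k [h1 h2 h3]]] := IH _ sL'' hz.
have memL : forall i, i < m -> sg i \in L' /\ col x (sg i) = z.
  by move=> i /h1; rewrite mem_filter => /andP[/eqP].
exists (fun i => if i is i'.+1 then sg i' else x),
       (fun i => if i is i'.+1 then k i' else z); split.
- case=> [|i] hi; rewrite inE ?eqxx //.
  by rewrite (memL i hi).1 orbT.
- case=> [|i] [|j] // hij hj.
    by have [h _] := memL j hj; exact: (allP allx _ h).
  exact: h2.
- case=> [|i] [|j] // hij hj.
    by have [_ h] := memL j hj.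
  exact: h3.
Qed.

Definition rb n := g (#|C| * n).

Lemma ramsey (col : nat -> nat -> C) n : exists sg : nat -> nat,
  [/\ (forall a, a < n -> sg a < rb n),
      (forall a b, a < b -> b < n -> sg a < sg b) &
      exists M, forall a b, a < b -> b < n -> col (sg a) (sg b) = M].
Proof.
set m := #|C| * n.
have hs : g m <= size (iota 0 (g m)) by rewrite size_iota.
have [sg [k [h1 h2 h3]]] := fwd col (iota_ltn_sorted 0 (g m)) hs.
have hs' : #|C| * n <= size (iota 0 m) by rewrite size_iota.
have [z hz] := pigeon k hs'.
set I := [seq i <- iota 0 m | k i == z] in hz.
rewrite -size_filter -/I in hz.
have sI : sorted ltn I by apply: sorted_filter; [exact: ltn_trans | exact: iota_ltn_sorted].
have memI : forall a, a < n -> nth 0 I a < m /\ k (nth 0 I a) = z.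
  move=> a ha; have : nth 0 I a \in I by apply: mem_nth; exact: leq_trans hz.
  by rewrite mem_filter mem_iota => /andP[/eqP -> /andP[_]].
exists (fun a => sg (nth 0 I a)); split.
- move=> a ha; have := h1 _ (memI a ha).1.
  by rewrite mem_iota.
- move=> a b hab hb; apply: h2; last exact: (memI b hb).1.
  apply: (sorted_ltn_nth ltn_trans 0 sI) => //; rewrite inE.
    exact: leq_trans (ltn_trans hab hb) hz.
  exact: leq_trans hb hz.
- exists z => a b hab hb; rewrite h3; first exact: (memI a (ltn_trans hab hb)).2.
  + apply: (sorted_ltn_nth ltn_trans 0 sI) => //; rewrite inE.
      exact: leq_trans (ltn_trans hab hb) hz.
    exact: leq_trans hb hz.
  + exact: (memI b hb).1.
Qed.

End Ramsey.


Section Hit.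
Variables (T : finType) (k : nat) (P : (nat -> T) -> Prop) (x0 : nat -> T).

Definition disj_fam (fam : nat -> nat -> T) N :=
  (forall i, i < N -> P (fam i)) /\
  (forall i j p q, i < N -> j < N -> p < k -> q < k -> i != j -> fam i p != fam j q).

Lemma hitting N : (exists fam, disj_fam fam N) \/
  (exists S : {set T}, #|S| <= k * N /\ forall x, P x -> exists2 p, p < k & x p \in S).
Proof.
elim: N => [|N [[fam [hP hD]]|[S [hS hh]]]].
- by left; exists (fun _ => x0); split.
- pose S := [set fam (nat_of_ord ip.1) (nat_of_ord ip.2) | ip : 'I_N * 'I_k].
  have cS : #|S| <= k * N.+1.
    apply: leq_trans (leq_imset_card _ _) _.
    rewrite card_prod !card_ord; lia.
  case: (classic (exists x, P x /\ forall p, p < k -> x p \notin S)) => [[x [Px hx]]|nx].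
    left; exists (fun i => if i == N then x else fam i); split.
      move=> i hi; case: (i =P N) => // /eqP iN; apply: hP; lia.
    move=> i j p q hi hj hp hq ij.
    have memS : forall i p, i < N -> p < k -> fam i p \in S.
      move=> i' p' hi' hp'; apply/imsetP; exists (Ordinal hi', Ordinal hp') => //.
    case: (i =P N) => [iN|/eqP iN]; case: (j =P N) => [jN|/eqP jN].
    + by subst; rewrite eqxx in ij.
    + apply/eqP => h; move: (hx p hp); rewrite h memS //; lia.
    + apply/eqP => h; move: (hx q hq); rewrite -h memS //; lia.
    + apply: hD => //; lia.
  right; exists S; split => // x Px.
  case: (boolP (has (fun p => x p \in S) (iota 0 k))) => [/hasP[p]|].
    by rewrite mem_iota => /andP[_ hp] xS; exists p.
  move=> nh; case: nx; exists x; split => // p hp; apply/negP => xS.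
  by move/hasP: nh; apply; exists p; rewrite ?mem_iota.
- right; exists S; split => //; apply: leq_trans hS _; lia.
Qed.

End Hit.


Section Bic.
Variables (T : finType) (e : rel T).
Hypothesis esym : symmetric e.
Hypothesis eirr : irreflexive e.

Definition tri a b c := [&& e a b, e b c & e a c].
Definition bad4 a b c d := [&& e a b, e c d, ~~ e a c, ~~ e b d & ~~ e a d].

Lemma biclique (W : {set T}) :
  (forall a b c, a \in W -> b \in W -> c \in W -> ~~ tri a b c) ->
  (forall a b c d, a \in W -> b \in W -> c \in W -> d \in W -> ~~ bad4 a b c d) ->
  extended_biclique e W.
Proof.
move=> htri hbad.
case: (pickP (fun p : T * T => [&& p.1 \in W, p.2 \in W & e p.1 p.2]))
  => [[u v] /= /and3P[uW vW euv] | none]; last first.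
  exists set0, set0; split; rewrite ?sub0set ?disjoint0 //.
    by rewrite -setI_eq0 setI0.
  move=> x y xW yW; rewrite !inE /=; move: (none (x, y)) => /=.
  by rewrite xW yW /= => ->.
exists [set x in W | e v x], [set x in W | e u x]; split.
- by apply/subsetP => x; rewrite inE => /andP[].
- by apply/subsetP => x; rewrite inE => /andP[].
- rewrite disjoints_subset; apply/subsetP => x; rewrite !inE => /andP[xW evx].
  apply/negP => /andP[_ eux]; move: (htri u v x uW vW xW).
  by rewrite /tri euv evx eux.
move=> x y xW yW; rewrite !inE xW yW /=.
move: (htri u v x uW vW xW) (htri u v y uW vW yW) (htri u y v uW yW vW)
  (htri v u x vW uW xW) (htri v x y vW xW yW) (htri u x y uW xW yW)
  (hbad y u v x yW uW vW xW) (hbad u v x y uW vW xW yW)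
  (hbad x y v u xW yW vW uW) (hbad x y u v xW yW uW vW)
  (hbad y x v u yW xW vW uW) (hbad y x u v yW xW uW vW)
  (hbad x u v y xW uW vW yW).
rewrite /tri /bad4 (esym y u) (esym v u) (esym y x) (esym x v) (esym x u)
  (esym y v) euv.
case: (e v x); case: (e u x); case: (e v y); case: (e u y); case: (e x y) => //=.
Qed.

End Bic.


Section Cases.
Variables (T : finType) (e : rel T).
Hypothesis esym : symmetric e.
Hypothesis eirr : irreflexive e.

Lemma in2 (a b x : T) : x \in [set a; b] -> x = a \/ x = b.
Proof. by rewrite !inE => /orP[/eqP|/eqP]; [left|right]. Qed.

Lemma touch2 (a b c d : T) :
  touch e [set a; b] [set c; d] = [|| e a c, e a d, e b c | e b d].
Proof.
apply/touchP/idP => [[x [y [/in2[]-> /in2[]-> ->]]]|]; rewrite ?orbT //.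
case/or4P => h; [exists a, c|exists a, d|exists b, c|exists b, d];
  by rewrite !inE !eqxx ?orbT.
Qed.

Lemma indep2 (a b : T) : ~~ e a b ->
  forall x y, x \in [set a; b] -> y \in [set a; b] -> ~~ e x y.
Proof.
move=> nab x y /in2[]-> /in2[]->; rewrite ?eirr //.
by rewrite esym.
Qed.

Lemma code_inj t i j i' j' : j < t -> j' < t -> i * t + j = i' * t + j' ->
  i = i' /\ j = j'.
Proof.
move=> hj hj' h.
have h1 : (i * t + j) %/ t = i by rewrite divnMDl ?divn_small ?addn0 //; lia.
have h2 : (i' * t + j') %/ t = i' by rewrite divnMDl ?divn_small ?addn0 //; lia.
have ii : i = i' by rewrite -h1 -h2 h.
by subst; split => //; lia.
Qed.

Lemma proj_Kt t (c : nat -> {set T}) :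
  (forall i, i < t -> exists x, x \in c i) ->
  (forall i j x, i < t -> j < t -> x \in c i -> x \in c j -> i = j) ->
  (forall i x y, i < t -> x \in c i -> y \in c i -> ~~ e x y) ->
  (forall i j, i < j -> j < t -> touch e (c i) (c j)) ->
  is_projection e (@K_adj t).
Proof.
move=> h1 h2 h3 h4.
apply: (@proj_classes T e esym eirr 'I_t _ (fun i => c i)).
- move=> i; exact: h1.
- move=> i j x xi xj; apply: val_inj; exact: h2 xi xj.
- move=> i x y; exact: h3.
- move=> i j; rewrite /K_adj; case: (i =P j) => [->|/eqP ij] //=.
  symmetry.
  case: (ltngtP i j) => [lt|gt|/val_inj eq]; first exact: h4 lt (ltn_ord j).
    by rewrite (touchC esym); exact: h4 gt (ltn_ord i).
  by rewrite eq eqxx in ij.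
Qed.

Lemma proj_Kttt t (c : nat -> nat -> {set T}) :
  (forall p i, p < 3 -> i < t -> exists x, x \in c p i) ->
  (forall p i q j x, p < 3 -> i < t -> q < 3 -> j < t ->
     x \in c p i -> x \in c q j -> p = q /\ i = j) ->
  (forall p i x y, p < 3 -> i < t -> x \in c p i -> y \in c p i -> ~~ e x y) ->
  (forall p q i j, p < q -> q < 3 -> i < t -> j < t -> touch e (c p i) (c q j)) ->
  (forall p i j, p < 3 -> i < j -> j < t -> ~~ touch e (c p i) (c p j)) ->
  is_projection e (@Kttt_adj t).
Proof.
move=> h1 h2 h3 h4 h5.
apply: (@proj_classes T e esym eirr _ _ (fun s : 'I_3 * 'I_t => c s.1 s.2)).
- move=> [p i]; exact: h1.
- move=> [p i] [q j] x /= xi xj; have [pq ij] := h2 _ _ _ _ _ (ltn_ord p) (ltn_ord i)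
    (ltn_ord q) (ltn_ord j) xi xj.
  by congr pair; apply: val_inj.
- move=> [p i] x y; exact: h3.
- move=> [p i] [q j]; rewrite /Kttt_adj /=.
  case: (p =P q) => [<-|/eqP pq] /=.
    case: (i =P j) => [->|/eqP ij]; first by rewrite eqxx.
    rewrite xpair_eqE eqxx (negbTE ij) /=.
    case: (ltngtP i j) => [lt|gt|/val_inj eq].
    + by symmetry; apply/negbTE; apply: h5 lt (ltn_ord j).
    + by rewrite (touchC esym); symmetry; apply/negbTE; apply: h5 gt (ltn_ord i).
    + by rewrite eq eqxx in ij.
  rewrite xpair_eqE (negbTE pq) /=.
  case: (ltngtP p q) => [lt|gt|/val_inj eq].
  + by symmetry; apply: h4 lt (ltn_ord q) (ltn_ord i) (ltn_ord j).
  + by rewrite (touchC esym); symmetry; apply: h4 gt (ltn_ord p) (ltn_ord j) (ltn_ord i).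
  + by rewrite eq eqxx in pq.
Qed.


Lemma code_lt t i j : i < t -> j < t -> i * t + j < t * t.
Proof.
move=> hi hj; have : i.+1 * t <= t * t by rewrite leq_mul2r hi orbT.
rewrite mulSn; lia.
Qed.

Section Pair.
Variables (n : nat) (P Q : nat -> T).
Hypothesis injP : forall a b, a < n -> b < n -> P a = P b -> a = b.
Hypothesis injQ : forall a b, a < n -> b < n -> Q a = Q b -> a = b.
Hypothesis PQ : forall a b, a < n -> b < n -> P a != Q b.

Lemma clique t : t <= n -> (forall a b, a < b -> b < n -> e (P a) (P b)) ->
  is_projection e (@K_adj t).
Proof.
move=> tn hP; apply: (@proj_Kt t (fun i => [set P i])).
- by move=> i _; exists (P i); rewrite inE.
- move=> i j x hi hj; rewrite !inE => /eqP-> /eqP h; apply: injP => //; lia.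
- by move=> i x y _; rewrite !inE => /eqP-> /eqP->; rewrite eirr.
- by move=> i j hij hj; rewrite touch1 //; apply: hP => //; lia.
Qed.

Hypothesis hPP : forall a b, a < b -> b < n -> e (P a) (P b) = false.
Hypothesis hQQ : forall a b, a < b -> b < n -> e (Q a) (Q b) = false.

Lemma ladder t : 2 * t <= n ->
  (forall a b, a < b -> b < n -> e (P a) (Q b)) ->
  (forall a b, a < b -> b < n -> e (Q a) (P b) = false) ->
  is_projection e (@K_adj t).
Proof.
move=> tn hPQ hQP; apply: (@proj_Kt t (fun i => [set P (2 * i).+1; Q (2 * i)])).
- by move=> i _; exists (P (2 * i).+1); rewrite !inE eqxx.
- move=> i j x hi hj /in2[]-> /in2[] h.
  + have := injP _ _ h; lia.
  + by move: (@PQ (2 * i).+1 (2 * j)); rewrite h eqxx; lia.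
  + by move: (@PQ (2 * j).+1 (2 * i)); rewrite h eqxx; lia.
  + have := injQ _ _ h; lia.
- move=> i x y hi; apply: indep2; rewrite esym hQP //; lia.
- move=> i j hij hj; rewrite touch2 hPQ ?orbT //; lia.
Qed.

Lemma PPne a b : a < n -> b < n -> a != b -> e (P a) (P b) = false.
Proof.
move=> ha hb; case: (ltngtP a b) => // h _; first exact: hPP.
by rewrite esym hPP.
Qed.

Lemma QQne a b : a < n -> b < n -> a != b -> e (Q a) (Q b) = false.
Proof.
move=> ha hb; case: (ltngtP a b) => // h _; first exact: hQQ.
by rewrite esym hQQ.
Qed.

Lemma comatch t : t <= n ->
  (forall a, a < n -> e (P a) (Q a) = false) ->
  (forall a b, a < b -> b < n -> e (P a) (Q b)) ->
  is_projection e (@K_adj t).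
Proof.
move=> tn hd hPQ; apply: (@proj_Kt t (fun i => [set P i; Q i])).
- by move=> i _; exists (P i); rewrite !inE eqxx.
- move=> i j x hi hj /in2[]-> /in2[] h.
  + apply: injP h; lia.
  + by move: (@PQ i j); rewrite h eqxx; lia.
  + by move: (@PQ j i); rewrite h eqxx; lia.
  + apply: injQ h; lia.
- move=> i x y hi; apply: indep2; rewrite hd //; lia.
- move=> i j hij hj; rewrite touch2 hPQ ?orbT //; lia.
Qed.

Lemma indmatch t : t * t <= n ->
  (forall a b, a < n -> b < n -> a != b -> e (P a) (Q b) = false) ->
  (forall a, a < n -> e (P a) (Q a)) ->
  is_projection e (@K_adj t).
Proof.
move=> tn hx hd.
pose c i := [set P (i * t + val j) | j : 'I_t & i <= j] :|:
            [set Q (val j * t + i) | j : 'I_t & j < i].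
have memc : forall i x, x \in c i ->
   (exists2 j, (j < t) && (i <= j) & x = P (i * t + j)) \/
   (exists2 j, (j < t) && (j < i) & x = Q (j * t + i)).
  move=> i x; rewrite inE => /orP[] /imsetP[j]; rewrite inE => hj ->.
    by left; exists (val j); rewrite ?ltn_ord.
  by right; exists (val j); rewrite ?ltn_ord.
have cl : forall i j, i < t -> j < t -> i * t + j < n.
  by move=> i j hi hj; apply: leq_trans (code_lt hi hj) tn.
apply: (@proj_Kt t c).
- move=> i hi; exists (P (i * t + i)); rewrite inE; apply/orP; left.
  by apply/imsetP; exists (Ordinal hi); rewrite ?inE.
- move=> i i' x hi hi' /memc[][j /andP[hj1 hj2] ->] /memc[][j' /andP[hj1' hj2'] h].
  + by have [] := code_inj hj1 hj1' (injP (cl _ _ hi hj1) (cl _ _ hi' hj1') h).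
  + by move: (@PQ (i * t + j) (j' * t + i') (cl _ _ hi hj1) (cl _ _ hj1' hi')); rewrite h eqxx.
  + by move: (@PQ (i' * t + j') (j * t + i) (cl _ _ hi' hj1') (cl _ _ hj1 hi)); rewrite h eqxx.
  + by have [] := code_inj hi hi' (injQ (cl _ _ hj1 hi) (cl _ _ hj1' hi') h).
- move=> i x y hi /memc[][j /andP[hj1 hj2] ->] /memc[][j' /andP[hj1' hj2'] ->].
  + case: (j =P j') => [->|/eqP jj]; first by rewrite eirr.
    rewrite PPne ?cl //; apply/eqP => h.
    by have [_ ] := code_inj hj1 hj1' h; apply/eqP.
  + rewrite hx ?cl //; apply/eqP => h.
    by have [] := code_inj hj1 hi h; lia.
  + rewrite esym hx ?cl //; apply/eqP => h.
    by have [] := code_inj hj1' hi h; lia.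
  + case: (j =P j') => [->|/eqP jj]; first by rewrite eirr.
    rewrite QQne ?cl //; apply/eqP => h.
    by have [] := code_inj hi hi h; move=> /eqP; rewrite (negbTE jj).
- move=> i j hij hj; apply/touchP; exists (P (i * t + j)), (Q (i * t + j)).
  have hi : i < t by lia.
  split; last by apply: hd; apply: cl.
    rewrite inE; apply/orP; left; apply/imsetP; exists (Ordinal hj) => //.
    by rewrite inE /= ltnW.
  rewrite inE; apply/orP; right; apply/imsetP; exists (Ordinal hi) => //.
  by rewrite inE.
Qed.

End Pair.

End Cases.


Lemma nbounds t n : 0 < t -> 3 * (t * t) <= n ->
  [/\ t <= n, 2 * t <= n, t * t <= n & 3 * t <= n].
Proof. move=> t0 hn; have tt : t <= t * t by rewrite leq_pmull. split; lia. Qed.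

Lemma cb_lem t n p i : 3 * t <= n -> p < 3 -> i < t -> p * t + i < n.
Proof.
move=> h3 hp hi; have : p.+1 * t <= 3 * t by rewrite leq_mul2r hp orbT.
rewrite mulSn; lia.
Qed.

Lemma cab_lem t p q i j : p < q -> i < t -> j < t -> p * t + i < q * t + j.
Proof.
move=> pq hi hj; have : p.+1 * t <= q * t by rewrite leq_mul2r pq orbT.
rewrite mulSn; lia.
Qed.

Section Fam.
Variables (T : finType) (e : rel T).
Hypothesis esym : symmetric e.
Hypothesis eirr : irreflexive e.

Lemma pair_case t n (P Q : nat -> T) (x y d : bool) :
  2 * t <= n -> t * t <= n ->
  (forall a b, a < n -> b < n -> P a = P b -> a = b) ->
  (forall a b, a < n -> b < n -> Q a = Q b -> a = b) ->
  (forall a b, a < n -> b < n -> P a != Q b) ->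
  (forall a b, a < b -> b < n -> e (P a) (P b) = false) ->
  (forall a b, a < b -> b < n -> e (Q a) (Q b) = false) ->
  (forall a b, a < b -> b < n -> e (P a) (Q b) = x) ->
  (forall a b, a < b -> b < n -> e (Q a) (P b) = y) ->
  (forall a, a < n -> e (P a) (Q a) = d) ->
  (x = d /\ y = d) \/ is_projection e (@K_adj t).
Proof.
move=> h2t htt injP injQ PQ hPP hQQ hx hy hd.
case: x hx => hx; case: y hy => hy.
- case: d hd => hd; first by left.
  right; apply: (comatch esym eirr injP injQ PQ _ hd hx); lia.
- by right; apply: (ladder esym eirr injP injQ PQ h2t hx hy).
- right; apply: (ladder esym eirr injQ injP _ h2t hy hx).
  by move=> a b ha hb; rewrite eq_sym; apply: PQ.
- case: d hd => hd; last by left.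
  right; apply: (indmatch esym eirr injP injQ PQ hPP hQQ htt _ hd) => a b ha hb ab.
  by case: (ltngtP a b) ab => // h _; [rewrite hx | rewrite esym hy].
Qed.

Section Hom.
Variables (n k : nat) (v : nat -> nat -> T) (m : nat -> nat -> bool).
Hypothesis vinj : forall a b p q, a < n -> b < n -> p < k -> q < k ->
  v a p = v b q -> a = b /\ p = q.
Hypothesis vhom : forall a b p q, a < b -> b < n -> p < k -> q < k ->
  e (v a p) (v b q) = m p q.

Lemma slot_diag t p : t <= n -> p < k -> m p p -> is_projection e (@K_adj t).
Proof.
move=> tn hp hm; apply: (clique esym eirr (n := n) (P := fun a => v a p)) => //.
  by move=> a b ha hb h; have [] := vinj ha hb hp hp h.
by move=> a b hab hb; rewrite vhom.
Qed.

Lemma slot_pair t p q d : 2 * t <= n -> t * t <= n -> p < k -> q < k -> p != q ->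
  m p p = false -> m q q = false ->
  (forall a, a < n -> e (v a p) (v a q) = d) ->
  (m p q = d /\ m q p = d) \/ is_projection e (@K_adj t).
Proof.
move=> h1 h2 hp hq pq mp mq hd.
apply: (pair_case (n := n) (P := fun a => v a p) (Q := fun a => v a q)) => //.
- by move=> a b ha hb h; have [] := vinj ha hb hp hp h.
- by move=> a b ha hb h; have [] := vinj ha hb hq hq h.
- by move=> a b ha hb; apply/eqP => h; have [_ /eqP] := vinj ha hb hp hq h; rewrite (negbTE pq).
- by move=> a b hab hb; rewrite vhom.
- by move=> a b hab hb; rewrite vhom.
- by move=> a b hab hb; rewrite vhom.
- by move=> a b hab hb; rewrite vhom.
Qed.

Lemma cross a b p q : a < n -> b < n -> a != b -> p < k -> q < k ->
  e (v a p) (v b q) = if a < b then m p q else m q p.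
Proof.
move=> ha hb ab hp hq; case: (ltngtP a b) ab => // h _.
  by rewrite vhom.
by rewrite esym vhom.
Qed.

Lemma tri_case t : 0 < t -> 3 * (t * t) <= n -> 3 <= k ->
  (forall a, a < n -> tri e (v a 0) (v a 1) (v a 2)) ->
  is_projection e (@K_adj t) \/ is_projection e (@Kttt_adj t).
Proof.
move=> t0 hn hk htri.
have [h0 h1 h2 _] := nbounds t0 hn.
have ltn_n : forall i, i < t -> i < n by move=> i hi; exact: leq_trans hi h0.
have ltk : forall p, p < 3 -> p < k by move=> p hp; exact: leq_trans hp hk.
case m0: (m 0 0); first by left; exact: (@slot_diag t 0 h0 (ltk 0 isT) m0).
case m1: (m 1 1); first by left; exact: (@slot_diag t 1 h0 (ltk 1 isT) m1).
case m2: (m 2 2); first by left; exact: (@slot_diag t 2 h0 (ltk 2 isT) m2).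
have hin : forall a p q, a < n -> p < 3 -> q < 3 -> p != q -> e (v a p) (v a q).
  move=> a p q ha; move: (htri a ha); rewrite /tri => /and3P[e01 e12 e02].
  by case: p => [|[|[|p]]] //; case: q => [|[|[|q]]] //; rewrite // esym.
have [[m01 m10]|] := @slot_pair t 0 1 true h1 h2 (ltk 0 isT) (ltk 1 isT) isT m0 m1
  (fun a ha => hin a 0 1 ha isT isT isT); last by left.
have [[m12 m21]|] := @slot_pair t 1 2 true h1 h2 (ltk 1 isT) (ltk 2 isT) isT m1 m2
  (fun a ha => hin a 1 2 ha isT isT isT); last by left.
have [[m02 m20]|] := @slot_pair t 0 2 true h1 h2 (ltk 0 isT) (ltk 2 isT) isT m0 m2
  (fun a ha => hin a 0 2 ha isT isT isT); last by left.
have mpq : forall p q, p < 3 -> q < 3 -> m p q = (p != q).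
  by case=> [|[|[|p]]] //; case=> [|[|[|q]]].
right; apply: (@proj_Kttt T e esym eirr t (fun p i => [set v i p])).
- by move=> p i _ _; exists (v i p); rewrite inE.
- move=> p i q j x hp hi hq hj; rewrite !inE => /eqP -> /eqP h.
  by have [-> ->] := vinj (ltn_n _ hi) (ltn_n _ hj) (ltk _ hp) (ltk _ hq) h.
- by move=> p i x y _ _; rewrite !inE => /eqP -> /eqP ->; rewrite eirr.
- move=> p q i j pq hq hi hj; have hp : p < 3 := ltn_trans pq hq.
  rewrite touch1 //.
  case: (i =P j) => [->|/eqP ij].
    by apply: hin => //; [exact: ltn_n | rewrite neq_ltn pq].
  rewrite cross ?ltn_n ?ltk // !mpq //.
  by case: ifP => _; rewrite neq_ltn pq ?orbT.
- move=> p i j hp ij hj; rewrite touch1 // (vhom ij (ltn_n _ hj) (ltk _ hp) (ltk _ hp)).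
  by rewrite mpq ?eqxx.
Qed.

Definition s1 p := if p == 1 then 1 else 0.
Definition s2 p := if p == 0 then 2 else 3.

Lemma bad4_case t : 0 < t -> 3 * (t * t) <= n -> 4 <= k ->
  (forall a, a < n -> bad4 e (v a 0) (v a 1) (v a 2) (v a 3)) ->
  is_projection e (@K_adj t) \/ is_projection e (@Kttt_adj t).
Proof.
move=> t0 hn hk hbad.
have [h0 h1 h2 h3] := nbounds t0 hn.
have ltk : forall p, p < 4 -> p < k by move=> p hp; exact: leq_trans hp hk.
have vh : forall a b r s, a < b -> b < n -> r < 4 -> s < 4 -> e (v a r) (v b s) = m r s.
  by move=> a b r s hab hb hr hs; apply: vhom => //; exact: ltk.
case m0: (m 0 0); first by left; exact: (@slot_diag t 0 h0 (ltk 0 isT) m0).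
case m1: (m 1 1); first by left; exact: (@slot_diag t 1 h0 (ltk 1 isT) m1).
case m2: (m 2 2); first by left; exact: (@slot_diag t 2 h0 (ltk 2 isT) m2).
case m3: (m 3 3); first by left; exact: (@slot_diag t 3 h0 (ltk 3 isT) m3).
have hb : forall a, a < n -> [/\ e (v a 0) (v a 1), e (v a 2) (v a 3),
   e (v a 0) (v a 2) = false, e (v a 1) (v a 3) = false & e (v a 0) (v a 3) = false].
  move=> a ha; move: (hbad a ha); rewrite /bad4.
  by case/and5P => -> -> /negbTE -> /negbTE -> /negbTE ->.
have [[m01 m10]|] := @slot_pair t 0 1 true h1 h2 (ltk 0 isT) (ltk 1 isT) isT m0 m1
  (fun a ha => let: And5 x _ _ _ _ := hb a ha in x); last by left.
have [[m23 m32]|] := @slot_pair t 2 3 true h1 h2 (ltk 2 isT) (ltk 3 isT) isT m2 m3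
  (fun a ha => let: And5 _ x _ _ _ := hb a ha in x); last by left.
have [[m02 m20]|] := @slot_pair t 0 2 false h1 h2 (ltk 0 isT) (ltk 2 isT) isT m0 m2
  (fun a ha => let: And5 _ _ x _ _ := hb a ha in x); last by left.
have [[m13 m31]|] := @slot_pair t 1 3 false h1 h2 (ltk 1 isT) (ltk 3 isT) isT m1 m3
  (fun a ha => let: And5 _ _ _ x _ := hb a ha in x); last by left.
have [[m03 m30]|] := @slot_pair t 0 3 false h1 h2 (ltk 0 isT) (ltk 3 isT) isT m0 m3
  (fun a ha => let: And5 _ _ _ _ x := hb a ha in x); last by left.
have cb : forall p i, p < 3 -> i < t -> p * t + i < n.
  by move=> p i; apply: cb_lem.
have s14 : forall p, s1 p < 4 by move=> p; rewrite /s1; case: ifP.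
have s24 : forall p, s2 p < 4 by move=> p; rewrite /s2; case: ifP.
right; apply: (@proj_Kttt T e esym eirr t
   (fun p i => [set v (p * t + i) (s1 p); v (p * t + i) (s2 p)])).
- by move=> p i _ _; exists (v (p * t + i) (s1 p)); rewrite !inE eqxx.
- move=> p i q j x hp hi hq hj /in2[]-> /in2[] h.
  + have [hc _] := vinj (cb _ _ hp hi) (cb _ _ hq hj) (ltk _ (s14 p)) (ltk _ (s14 q)) h.
    exact: code_inj hi hj hc.
  + have [hc _] := vinj (cb _ _ hp hi) (cb _ _ hq hj) (ltk _ (s14 p)) (ltk _ (s24 q)) h.
    exact: code_inj hi hj hc.
  + have [hc _] := vinj (cb _ _ hp hi) (cb _ _ hq hj) (ltk _ (s24 p)) (ltk _ (s14 q)) h.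
    exact: code_inj hi hj hc.
  + have [hc _] := vinj (cb _ _ hp hi) (cb _ _ hq hj) (ltk _ (s24 p)) (ltk _ (s24 q)) h.
    exact: code_inj hi hj hc.
- move=> p i x y hp hi; apply: indep2 => //.
  have [_ _ e02 e13 e03] := hb _ (cb _ _ hp hi).
  move: e02 e13 e03; case: p hp {hi} => [|[|[|p]]] //= _;
    by rewrite /s1 /s2 /= => h4 h5 h6; rewrite ?h4 ?h5 ?h6.
- move=> p q i j pq hq hi hj; rewrite touch2.
  have hab := cab_lem pq hi hj.
  have hbn := cb _ _ hq hj.
  move: hab hbn; case: p q pq hq => [|[|[|p]]] [|[|[|q]]] //= _ _ hab hbn;
    rewrite /s1 /s2 /= !(vh _ _ _ _ hab hbn) //.
  + by rewrite m01.
  + by rewrite m23 !orbT.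
  + by rewrite m10.
- move=> p i j hp ij hj; rewrite touch2.
  have hab : p * t + i < p * t + j by rewrite ltn_add2l.
  have hbn := cb _ _ hp hj.
  case: p hp {hbn hab} (hab) (hbn) => [|[|[|p]]] //= _ hab hbn;
    rewrite /s1 /s2 /= !(vh _ _ _ _ hab hbn) //.
  + by rewrite m0 m02 m20 m2.
  + by rewrite m1 m13 m31 m3.
  + by rewrite m0 m03 m30 m3.
Qed.

End Hom.
End Fam.


Section Main.
Variables (T : finType) (e : rel T).
Hypothesis esym : symmetric e.
Hypothesis eirr : irreflexive e.

Lemma edge_neq a b : e a b -> a != b.
Proof. by move=> h; apply/eqP => ab; move: h; rewrite ab eirr. Qed.

Lemma tri_distinct (x : nat -> T) : tri e (x 0) (x 1) (x 2) ->
  forall p q, p < 3 -> q < 3 -> p != q -> x p != x q.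
Proof.
rewrite /tri => /and3P[e01 e12 e02] p q hp hq pq; apply: edge_neq.
by case: p hp pq => [|[|[|p]]] //; case: q hq => [|[|[|q]]] //; rewrite // esym.
Qed.

Lemma bad4_distinct (x : nat -> T) : bad4 e (x 0) (x 1) (x 2) (x 3) ->
  forall p q, p < 4 -> q < 4 -> p != q -> x p != x q.
Proof.
rewrite /bad4 => /and5P[e01 e23 n02 n13 n03].
have d : forall p q, p < q -> q < 4 -> x p != x q.
  case=> [|[|[|p]]] [|[|[|[|q]]]] //= _ _.
  - exact: edge_neq.
  - by apply/eqP => h; move: n03; rewrite h e23.
  - by apply/eqP => h; move: n02; rewrite h esym e23.
  - by apply/eqP => h; move: n13; rewrite h e23.
  - by apply/eqP => h; move: n03; rewrite -h e01.
  - exact: edge_neq.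
move=> p q hp hq; case: (ltngtP p q) => // h _; first exact: d.
by rewrite eq_sym; apply: d.
Qed.

Lemma fam_props kk n N (fam : nat -> nat -> T) (sg : nat -> nat)
    (M : {ffun 'I_kk.+1 * 'I_kk.+1 -> bool}) :
  (forall i j p q, i < N -> j < N -> p < kk.+1 -> q < kk.+1 -> i != j ->
     fam i p != fam j q) ->
  (forall i p q, i < N -> p < kk.+1 -> q < kk.+1 -> p != q -> fam i p != fam i q) ->
  (forall a, a < n -> sg a < N) ->
  (forall a b, a < b -> b < n -> sg a < sg b) ->
  (forall a b, a < b -> b < n ->
     [ffun pq : 'I_kk.+1 * 'I_kk.+1 => e (fam (sg a) pq.1) (fam (sg b) pq.2)] = M) ->
  (forall a b p q, a < n -> b < n -> p < kk.+1 -> q < kk.+1 ->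
     fam (sg a) p = fam (sg b) q -> a = b /\ p = q) /\
  (forall a b p q, a < b -> b < n -> p < kk.+1 -> q < kk.+1 ->
     e (fam (sg a) p) (fam (sg b) q) = M (inord p, inord q)).
Proof.
move=> hD hI hb hinc hM; split.
- move=> a b p q ha hb' hp hq h.
  case: (ltngtP a b) => [ab|ba|ab].
  + have := hinc _ _ ab hb'; rewrite ltn_neqAle => /andP[ne _].
    by move: (hD _ _ _ _ (hb _ ha) (hb _ hb') hp hq ne); rewrite h eqxx.
  + have := hinc _ _ ba ha; rewrite ltn_neqAle => /andP[ne _].
    by move: (hD _ _ _ _ (hb _ hb') (hb _ ha) hq hp ne); rewrite h eqxx.
  + subst b; split => //; apply/eqP; apply: contraTT isT => pq.
    by move: (hI _ _ _ (hb _ ha) hp hq pq); rewrite h eqxx.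
- move=> a b p q ab hb' hp hq; rewrite -(hM _ _ ab hb') ffunE /=.
  by rewrite !inordK.
Qed.

End Main.

Definition C3 := {ffun 'I_3 * 'I_3 -> bool}.
Definition C4 := {ffun 'I_4 * 'I_4 -> bool}.

Theorem theorem1p15 :
  exists f : nat -> nat,
    forall (T : finType) (e : rel T), simple_graph e ->
    forall t : nat, 0 < t ->
      is_projection e (@K_adj t) \/
      is_projection e (@Kttt_adj t) \/
      exists S : {set T}, #|S| <= f t /\ extended_biclique e (~: S).
Proof.
exists (fun t => 3 * rb C3 (3 * (t * t)) + 4 * rb C4 (3 * (t * t))).
move=> T e [esym eirr] t t0.
set n0 := 3 * (t * t).
case: (pickP (fun _ : T => true)) => [z _|none]; last first.
  right; right; exists set0; split; first by rewrite cards0.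
  exists set0, set0; split; rewrite ?sub0set ?disjoint0 //.
    by rewrite -setI_eq0 setI0.
  by move=> x; move: (none x).
have H3 := hitting 3 (fun x => tri e (x 0) (x 1) (x 2)) (fun _ => z) (rb C3 n0).
have H4 := hitting 4 (fun x => bad4 e (x 0) (x 1) (x 2) (x 3)) (fun _ => z) (rb C4 n0).
case: H3 => [[fam [famP famD]]|[S3 [cS3 hS3]]].
  pose col i j : C3 := [ffun pq : 'I_3 * 'I_3 => e (fam i pq.1) (fam j pq.2)].
  have [sg [sgb sginc [M hM]]] := ramsey [ffun _ => false] col n0.
  have [vinj vhom] := fam_props (kk := 2) (M := M) famD
    (fun i p q hi hp hq pq => tri_distinct esym eirr (famP i hi) hp hq pq) sgb sginc hM.
  have := tri_case esym eirr vinj vhom t0 (leqnn _) (leqnn _)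
    (fun a ha => famP _ (sgb a ha)).
  by case; [left | right; left].
case: H4 => [[fam [famP famD]]|[S4 [cS4 hS4]]].
  pose col i j : C4 := [ffun pq : 'I_4 * 'I_4 => e (fam i pq.1) (fam j pq.2)].
  have [sg [sgb sginc [M hM]]] := ramsey [ffun _ => false] col n0.
  have [vinj vhom] := fam_props (kk := 3) (M := M) famD
    (fun i p q hi hp hq pq => bad4_distinct esym eirr (famP i hi) hp hq pq) sgb sginc hM.
  have := bad4_case esym eirr vinj vhom t0 (leqnn _) (leqnn _)
    (fun a ha => famP _ (sgb a ha)).
  by case; [left | right; left].
right; right; exists (S3 :|: S4); split.
  apply: leq_trans (leq_card_setU _ _) _; lia.
apply: biclique => //.
- move=> a b c; rewrite !inE !negb_or => /andP[a3 a4] /andP[b3 b4] /andP[c3 c4].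
  apply/negP => h.
  have [p hp] := hS3 (fun p => if p == 0 then a else if p == 1 then b else c) h.
  by case: p hp => [|[|[|p]]] //= _; rewrite ?(negbTE a3) ?(negbTE b3) ?(negbTE c3).
- move=> a b c d; rewrite !inE !negb_or => /andP[a3 a4] /andP[b3 b4] /andP[c3 c4] /andP[d3 d4].
  apply/negP => h.
  have [p hp] := hS4 (fun p => if p == 0 then a else if p == 1 then b
                             else if p == 2 then c else d) h.
  by case: p hp => [|[|[|[|p]]]] //= _;
    rewrite ?(negbTE a4) ?(negbTE b4) ?(negbTE c4) ?(negbTE d4).
Qed.
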